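(* Let $q\equiv1\pmod4$ be a prime power, let $i_2$ be an even integer with $0<i_2<(q+1)/2$, and let $r$ be a positive integer with $\gcd(r,q-1)=\gcd(r-i_2,(q+1)/2)=\gcd(r-2i_2,(q+1)/2)=1$. Let $b\in\mathbb F_{q^2}^*$ satisfy $(2/b)^{(q+1)/2}=1$. Then $$X^r\bigl(1-X^{(q^2-1)/2}+bX^{i_2(q-1)}\bigr)$$ is a permutation polynomial of $\mathbb F_{q^2}$. *)

(* Defs.v *)
From mathcomp Require Import all_boot all_order all_algebra all_field.
Set Implicit Arguments. Unset Strict Implicit. Unset Printing Implicit Defensive.
Import GRing.Theory.
Local Open Scope ring_scope.

Definition is_perm_poly (F : finFieldType) (f : {poly F}) : Prop :=
  bijective (fun x : F => f.[x]).

Definition prime_power (q : nat) : Prop :=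
  exists p k : nat, prime p /\ (0 < k)%N /\ q = (p ^ k)%N.

(* Main.v *)
Require Import Defs.
From mathcomp Require Import all_boot all_order all_algebra all_field.
From mathcomp Require Import zify ring.
Require Import Defs.
Import GRing.Theory.
Local Open Scope ring_scope.

Lemma core (F : fieldType) (w : F) (s r k : nat) :
  w != 0 -> w ^+ s = 1 -> w ^+ r = w ^+ k ->
  gcdz (r%:Z - k%:Z) s%:Z = 1%N -> w = 1.
Proof.
move=> w0 ws wrk g.
have [a [c E]] := Bezoutz (r%:Z - k%:Z) s%:Z.
rewrite g in E.
have wrk' : w ^ (r%:Z - k%:Z) = 1.
  rewrite expfzDr // -invr_expz -!exprnP wrk divff //.
  by rewrite expf_neq0.
have ->: w = w ^ (a * (r%:Z - k%:Z) + c * s%:Z) by rewrite E.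
rewrite expfzDr // [a * _]mulrC [c * _]mulrC -!exprz_exp wrk' -exprnP ws.
by rewrite !exp1rz mulr1.
Qed.

Lemma cross (F : fieldType) (u v : F) (s r k : nat) :
  u != 0 -> v != 0 -> u ^+ s = v ^+ s -> u ^+ r * v ^+ k = v ^+ r * u ^+ k ->
  gcdz (r%:Z - k%:Z) s%:Z = 1%N -> u = v.
Proof.
move=> u0 v0 es erk g.
have w0 : u / v != 0 by rewrite mulf_neq0 ?invr_eq0.
have ws : (u / v) ^+ s = 1 by rewrite exprMn exprVn es divff ?expf_neq0.
have wrk : (u / v) ^+ r = (u / v) ^+ k.
  rewrite !exprMn !exprVn.
  apply: (mulIf (expf_neq0 r v0)); apply: (mulIf (expf_neq0 k v0)).
  rewrite divfK ?expf_neq0 //.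
  rewrite mulrAC divfK ?expf_neq0 //.
  by rewrite erk mulrC.
have H := @core F (u / v) s r k w0 ws wrk g.
have: (u / v) * v = v by rewrite H mul1r.
by rewrite divfK.
Qed.


Lemma aux_sq t : ((t*4*(t*4+1+1)).+1 = ((t*4+1)*(t*4+1)))%N.
Proof. nia. Qed.

Theorem mainTheorem18 (F : finFieldType) (q i2 r : nat) (b : F)
  (hq : prime_power q) (hq4 : (q %% 4 = 1)%N)
  (hF : #|F| = (q ^ 2)%N)
  (hi2even : ~~ odd i2) (hi2pos : (0 < i2)%N) (hi2lt : (i2 < (q + 1) %/ 2)%N)
  (hr : (0 < r)%N)
  (hg1 : gcdn r (q - 1) = 1%N)
  (hg2 : gcdz (r%:Z - i2%:Z) ((q + 1) %/ 2)%N%:Z = 1%N)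
  (hg3 : gcdz (r%:Z - (2 * i2)%N%:Z) ((q + 1) %/ 2)%N%:Z = 1%N)
  (hb0 : b != 0)
  (hb : (2%:R / b) ^+ ((q + 1) %/ 2) = 1) :
  is_perm_poly ('X^r * (1 - 'X^((q ^ 2 - 1) %/ 2) + b *: 'X^(i2 * (q - 1)))).
Proof.
case: hq => p [k [hp [hk eq]]].
set s := ((q + 1) %/ 2)%N.
have [t ht] : exists t, q = (t * 4 + 1)%N by exists (q %/ 4)%N; rewrite {1}(divn_eq q 4) hq4.
have hs2 : s = (t * 2 + 1)%N by rewrite /s ht; lia.
have hs : (q + 1 = 2 * s)%N by rewrite hs2 ht; lia.
have hsodd : odd s.
  by rewrite hs2 oddD oddM andbF.
have hqodd : odd q by rewrite ht oddD oddM andbF.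
have hexp : ((q ^ 2 - 1) %/ 2 = (q - 1) * s)%N.
  rewrite hs2 ht -[((t * 4 + 1) ^ 2)%N]/((t * 4 + 1) * (t*4+1))%N.
  have -> : ((t * 4 + 1) * (t * 4 + 1) - 1 = (t * 4 * (t * 2 + 1)) * 2)%N by nia.
  by rewrite mulnK // addnK.
have hpc : p \in [pchar F].
  by apply: (@card_finPcharP F p (k * 2)) => //; rewrite hF eq expnM.
have hnat : [pchar F].-nat q by rewrite eq pnatX (pnatE _ hp) hpc.
have hfrob (y z : F) : (y + z) ^+ q = y ^+ q + z ^+ q by apply: exprDn_pchar.
have h2q : (2 : F) ^+ q = 2.
  have -> : (2 : F) = 1 + 1 by rewrite -mulr2n.
  by rewrite hfrob expr1n.
have h2 : (2 : F) != 0.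
  apply/negP => /eqP H.
  have : (p %| 2)%N by rewrite (dvdn_pcharf hpc) H.
  move=> /(dvdn_leq (isT : (0 < 2)%N)) hp2.
  have p2 : p = 2%N by have := prime_gt1 hp; lia.
  by move: hqodd; rewrite eq p2 oddX; case: (k) hk.

have hbs0 : b ^+ s != 0 := expf_neq0 _ hb0.
have hbs : b ^+ s = 2 ^+ s.
  move: hb; rewrite exprMn exprVn => E.
  by rewrite -[RHS](divfK hbs0) E mul1r.
have h4 : (4 : F) != 0.
  have -> : (4 : F) = 2 * 2 by rewrite -natrM.
  by rewrite mulf_neq0.
have hbq : b ^+ (q + 1) = 4.
  rewrite hs mulnC exprM hbs -exprM mulnC -hs exprD h2q expr1.
  by rewrite -natrM.
have hrodd : odd r.
  case: (boolP (odd r)) => // hre.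
  have h2r : (2 %| r)%N by rewrite dvdn2.
  have h2q1 : (2 %| q - 1)%N.
    rewrite dvdn2; move: hqodd; case: (q) => //= n; by rewrite subn1 /= => ->.
  have : (2 %| gcdn r (q - 1))%N by rewrite dvdn_gcd h2r h2q1.
  by rewrite hg1.

have hus (u : F) : u ^+ (q + 1) = 1 -> u ^+ s = 1 \/ u ^+ s = -1.
  move=> E; have : (u ^+ s) ^+ 2 == 1 by rewrite -exprM mulnC -hs E.
  by rewrite sqrf_eq1 => /orP[/eqP|/eqP]; auto.
have hu0 (u : F) : u ^+ (q + 1) = 1 -> u != 0.
  move=> E; apply/eqP => u0; move: E; rewrite u0 expr0n addn1 => /esym/eqP.
  by rewrite oner_eq0.
have hm1i2 : (-1 : F) ^+ i2 = 1 by rewrite -signr_odd (negbTE hi2even).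
have hm1r : (-1 : F) ^+ r = -1 by rewrite -signr_odd hrodd expr1.
have hm1s : (-1 : F) ^+ s = -1 by rewrite -signr_odd hsodd expr1.
have hq1 : (1 <= q)%N by rewrite ht; lia.
have hcase1 (u : F) : u ^+ (q + 1) = 1 -> u ^+ s = 1 ->
   (1 - u ^+ s + b * u ^+ i2) ^+ (q - 1) * (b ^+ 2 * u ^+ (2 * i2)) = 4.
  move=> E us; rewrite us subrr add0r.
  have -> : b ^+ 2 * u ^+ (2 * i2) = (b * u ^+ i2) ^+ 2 by rewrite exprMn -exprM mulnC.
  rewrite -exprD (_ : (q - 1 + 2 = q + 1)%N); last by lia.
  by rewrite exprMn hbq -exprM mulnC exprM E expr1n mulr1.

have h2e : 1 - (-1) = 2 :> F by rewrite opprK.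
have hc2nz (u : F) : u ^+ (q + 1) = 1 -> u ^+ s = -1 ->
   1 - u ^+ s + b * u ^+ i2 != 0.
  move=> E us; rewrite us h2e; apply/negP => /eqP H.
  have H' : b * u ^+ i2 = - 2 by apply/eqP; rewrite -addr_eq0 addrC H.
  have := congr1 (fun z => z ^+ s) H'; rewrite /= exprMn -exprM mulnC exprM us hm1i2.
  rewrite exprNn hm1s mulr1 hbs mulN1r => H2.
  have : 2 * 2 ^+ s == 0 :> F by rewrite mulr_natl mulr2n {1}H2 addNr.
  by rewrite mulf_eq0 (negbTE h2) /= expf_eq0 (negbTE h2) andbF.
have hcase2 (u : F) : u ^+ (q + 1) = 1 -> u ^+ s = -1 ->
   (1 - u ^+ s + b * u ^+ i2) ^+ (q - 1) * (b * u ^+ i2) = 2.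
  move=> E us; have cnz := hc2nz u E us; move: cnz; rewrite us h2e => cnz.
  have e1 : (2 + b * u ^+ i2) ^+ q * (b * u ^+ i2) = 2 * (2 + b * u ^+ i2).
    rewrite hfrob h2q exprMn mulrDl.
    have -> : b ^+ q * (u ^+ i2) ^+ q * (b * u ^+ i2) = 4.
      by rewrite mulrACA -exprSr -exprSr exprAC -addn1 E expr1n -addn1 hbq mulr1.
    by rewrite [RHS]mulrDr -natrM addrC.
  have e2 : (2 + b * u ^+ i2) ^+ q = (2 + b * u ^+ i2) ^+ (q - 1) * (2 + b * u ^+ i2).
    by rewrite -exprSr; congr (_ ^+ _); lia.
  apply: (mulIf cnz); rewrite mulrAC -e2 e1 mulrC //.

have h22 : (2 : F) ^+ 2 = 4 by rewrite expr2 -natrM.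
have hG (u : F) : u ^+ (q + 1) = 1 ->
   (u ^+ r * (1 - u ^+ s + b * u ^+ i2) ^+ (q - 1)) ^+ s = u ^+ s.
  move=> E; case: (hus u E) => us.
  - have E1 := hcase1 u E us.
    have E2 : (u ^+ r * (1 - u ^+ s + b * u ^+ i2) ^+ (q - 1)) * (b ^+ 2 * u ^+ (2 * i2))
             = 4 * u ^+ r by rewrite -mulrA E1 mulrC.
    apply: (@etrans _ _ 1); last by rewrite us.
    move: E2; move: (u ^+ r * _) => g.
    move=> /(congr1 (fun z => z ^+ s)) /=.
    rewrite !exprMn (exprAC u (2 * i2)%N) (exprAC u r) us !expr1n hbs -exprMn -natrM.
    rewrite mulr1 => H; apply: (mulIf (expf_neq0 s h4)); by rewrite H mul1r.
  - have E1 := hcase2 u E us.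
    have E2 : (u ^+ r * (1 - u ^+ s + b * u ^+ i2) ^+ (q - 1)) * (b * u ^+ i2)
             = 2 * u ^+ r by rewrite -mulrA E1 mulrC.
    apply: (@etrans _ _ (-1)); last by rewrite us.
    move: E2; move: (u ^+ r * _) => g.
    move=> /(congr1 (fun z => z ^+ s)) /=.
    rewrite !exprMn (exprAC u i2) (exprAC u r) us hm1i2 hm1r hbs mulr1 => H.
    apply: (mulIf (expf_neq0 s h2)); by rewrite H mulrN1 mulN1r.

have hev (x : F) : ('X^r * (1 - 'X^((q ^ 2 - 1) %/ 2) + b *: 'X^(i2 * (q - 1)))).[x]
    = x ^+ r * (1 - (x ^+ (q - 1)) ^+ s + b * (x ^+ (q - 1)) ^+ i2).
  rewrite !hornerE hexp -exprM [(i2 * _)%N]mulnC -exprM //.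
have hx1 (x : F) : x != 0 -> (x ^+ (q - 1)) ^+ (q + 1) = 1.
  move=> x0; rewrite -exprM; apply: (mulIf x0); rewrite mul1r -exprSr.
  have -> : ((q - 1) * (q + 1)).+1 = #|F| by rewrite hF -mulnn ht addnK aux_sq.
  exact: expf_card.
have hcnz (u : F) : u ^+ (q + 1) = 1 -> 1 - u ^+ s + b * u ^+ i2 != 0.
  move=> E; case: (hus u E) => us; last exact: hc2nz.
  by rewrite us subrr add0r mulf_neq0 // expf_neq0 // hu0.
have hfnz (x : F) : x != 0 -> x ^+ r * (1 - (x ^+ (q - 1)) ^+ s + b * (x ^+ (q - 1)) ^+ i2) != 0.
  by move=> x0; rewrite mulf_neq0 ?expf_neq0 ?hcnz ?hx1.
have hr0 : (0 : F) ^+ r = 0 by rewrite expr0n; case: (r) hr.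
rewrite /is_perm_poly; apply: injF_bij => x y; rewrite !hev.
case: (eqVneq x 0) => [->|x0]; case: (eqVneq y 0) => [->|y0] //.
- by rewrite hr0 mul0r => /esym/eqP; rewrite (negbTE (hfnz y y0)).
- by rewrite hr0 mul0r => /eqP; rewrite (negbTE (hfnz x x0)).
move=> Exy.
have Eu := hx1 x x0; have Ev := hx1 y y0.
have Eg := congr1 (fun z => z ^+ (q - 1)) Exy; move: Eg; rewrite /= !exprMn (exprAC x) (exprAC y).
set u := x ^+ (q - 1) in Exy Eu *; set v := y ^+ (q - 1) in Exy Ev *.
move=> Eg.
have usv : u ^+ s = v ^+ s by rewrite -(hG u Eu) -(hG v Ev) Eg.
have huv : u = v.
  case: (hus u Eu) => us.
  + have vs : v ^+ s = 1 by rewrite -usv.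
    apply: (@cross F u v s r (2 * i2)%N (hu0 u Eu) (hu0 v Ev) usv _ hg3).
    have E1 := hcase1 u Eu us; have E2 := hcase1 v Ev vs.
    have Fu : 4 * u ^+ r = (u ^+ r * (1 - u ^+ s + b * u ^+ i2) ^+ (q - 1)) * (b ^+ 2 * u ^+ (2 * i2))
      by rewrite -mulrA E1 mulrC.
    have Fv : 4 * v ^+ r = (v ^+ r * (1 - v ^+ s + b * v ^+ i2) ^+ (q - 1)) * (b ^+ 2 * v ^+ (2 * i2))
      by rewrite -mulrA E2 mulrC.
    rewrite -Eg in Fv.
    apply: (mulfI h4); rewrite [LHS]mulrA Fu [RHS]mulrA Fv -!mulrA.
    by rewrite [v ^+ (2 * i2) * _]mulrC.
  + have vs : v ^+ s = -1 by rewrite -usv.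
    apply: (@cross F u v s r i2 (hu0 u Eu) (hu0 v Ev) usv _ hg2).
    have E1 := hcase2 u Eu us; have E2 := hcase2 v Ev vs.
    have Fu : 2 * u ^+ r = (u ^+ r * (1 - u ^+ s + b * u ^+ i2) ^+ (q - 1)) * (b * u ^+ i2)
      by rewrite -mulrA E1 mulrC.
    have Fv : 2 * v ^+ r = (v ^+ r * (1 - v ^+ s + b * v ^+ i2) ^+ (q - 1)) * (b * v ^+ i2)
      by rewrite -mulrA E2 mulrC.
    rewrite -Eg in Fv.
    apply: (mulfI h2); rewrite [LHS]mulrA Fu [RHS]mulrA Fv -!mulrA.
    by rewrite [v ^+ i2 * _]mulrC.
rewrite huv in Exy.
have exr := mulIf (hcnz v Ev) Exy.
apply: (@cross F x y (q - 1) r 0%N x0 y0 huv).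
  by rewrite !expr0 !mulr1.
by rewrite subr0 /gcdz /= hg1.
Qed.
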